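(* For $\mathsf t=(t_0:t_1)\in\mathbb P^1$ let $\mathcal X_{\mathsf t}\subset\mathbb P^4$ be defined by $s_1(x)=t_0s_4(x)+t_1s_2(x)^2=0$. Then $\mathcal X_{\mathsf t}$ is singular exactly for the five values $\mathsf t_1=(4:-1)$, $\mathsf t_2=(2:-1)$, $\mathsf t_3=(30:-7)$, $\mathsf t_4=(20:-13)$, $\mathsf t_5=(0:1)$. For $\nu=1,\dots,4$ all singularities of $\mathcal X_{\mathsf t_\nu}$ are of type $A_1$, their numbers are $15,10,10,5$ respectively, $\mathfrak A_5$ acts transitively on them, and one singular point is $(1:-1:1:-1:0)$, $(1:-1:0:0:0)$, $(2:2:2:-3:-3)$, $(1:1:1:1:-4)$ respectively; $\mathcal X_{\mathsf t_5}$ is a double quadric (the quadric $s_1=s_2=0$ counted twice). Moreover, the singular locus of the total space $\mathcal X=\{(x,\mathsf t)\in\mathbb P^4\times\mathbb P^1: x\in\mathcal X_{\mathsf t}\}$ is $\{\mathsf t=(0:1),\ s_1=s_2=s_4=0\}$.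
   Context: $(x_1:\dots:x_5)$ are homogeneous coordinates on $\mathbb P^4$ and $s_k=x_1^k+\dots+x_5^k$ is the $k$-th power sum. $\mathfrak S_5$ acts by permuting coordinates. Each $\mathcal X_{\mathsf t}$ is a quartic surface in the hyperplane $\{s_1=0\}\cong\mathbb P^3$. *)

(* Defs.v *)
From HB Require Import structures.
From mathcomp Require Import all_boot all_order all_algebra all_fingroup all_solvable.
Set Implicit Arguments. Unset Strict Implicit. Unset Printing Implicit Defensive.
Import GRing.Theory Num.Theory.
Local Open Scope ring_scope.

(* Points of the affine cone over P^4 are vectors 'I_5 -> R. *)
Definition psum (R : comNzRingType) (k : nat) (x : 'I_5 -> R) : R :=
  \sum_(i < 5) x i ^+ k.

(* The bihomogeneous form G(x,t) = t0 s4(x) + t1 s2(x)^2, defined over any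
   commutative ring (so it can be evaluated on polynomials). *)
Definition Gform (R : comNzRingType) (x : 'I_5 -> R) (t : R * R) : R :=
  t.1 * psum 4 x + t.2 * psum 2 x ^+ 2.

(* Restriction of G to the line (x + X v, t + X u): a univariate polynomial
   whose coefficients are the Taylor coefficients of G at (x,t) in the
   direction (v,u). *)
Definition Gline (C : fieldType) (x v : 'I_5 -> C) (t u : C * C) : {poly C} :=
  Gform (fun i => (x i)%:P + (v i)%:P * 'X) ((t.1)%:P + (u.1)%:P * 'X, (t.2)%:P + (u.2)%:P * 'X).

Definition nonzero5 (C : fieldType) (x : 'I_5 -> C) : Prop := exists i, x i != 0.

Definition proportional (C : fieldType) (x y : 'I_5 -> C) : Prop :=
  exists c : C, c != 0 /\ forall i, y i = c * x i.

(* t and (a:b) define the same point of P^1 (t assumed nonzero) *)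
Definition same_P1 (C : fieldType) (t : C * C) (a b : C) : Prop :=
  t.1 * b = t.2 * a.

(* x is a singular point of the surface X_t = {s1 = 0, G(.,t) = 0} viewed as a
   quartic hypersurface in the hyperplane {s1 = 0} = P^3: the differential of
   G(.,t) at x vanishes on all directions inside the hyperplane. *)
Definition sing_pt (C : fieldType) (t : C * C) (x : 'I_5 -> C) : Prop :=
  nonzero5 x /\ psum 1 x = 0 /\ Gform x t = 0 /\
  forall v : 'I_5 -> C, psum 1 v = 0 -> (Gline x v t (0, 0))`_1 = 0.

(* Quadratic part (half Hessian) of G(.,t) at x, and its polar bilinear form. *)
Definition hessq (C : fieldType) (t : C * C) (x v : 'I_5 -> C) : C :=
  (Gline x v t (0, 0))`_2.
Definition hessb (C : fieldType) (t : C * C) (x v w : 'I_5 -> C) : C :=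
  hessq t x (fun i => v i + w i) - hessq t x v - hessq t x w.

(* Singularity of type A_1 (ordinary double point): x is singular and the
   Hessian of the equation restricted to the hyperplane {s1 = 0} has rank 3,
   i.e. its radical (on the 4-dim space {s1=0}) is exactly the line of x. *)
Definition A1_pt (C : fieldType) (t : C * C) (x : 'I_5 -> C) : Prop :=
  sing_pt t x /\
  forall w : 'I_5 -> C, psum 1 w = 0 ->
    (forall v : 'I_5 -> C, psum 1 v = 0 -> hessb t x v w = 0) ->
    exists c : C, forall i, w i = c * x i.

(* Singular point (x,t) of the total space X in P^4 x P^1 (complete
   intersection s1 = G = 0): the differential of G at (x,t) vanishes on the
   kernel of the differential of s1 (Jacobian criterion). *)
Definition total_sing_pt (C : fieldType) (x : 'I_5 -> C) (t : C * C) : Prop :=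
  nonzero5 x /\ t != (0, 0) /\ psum 1 x = 0 /\ Gform x t = 0 /\
  forall (v : 'I_5 -> C) (u : C * C), psum 1 v = 0 -> (Gline x v t u)`_1 = 0.

Definition vec5 (C : fieldType) (a b c d e : C) : 'I_5 -> C :=
  fun i => nth 0 [:: a; b; c; d; e] i.

Definition nodal_config (C : fieldType) (t : C * C) (n : nat) (p : 'I_5 -> C) : Prop :=
  (exists P : 'I_n -> 'I_5 -> C,
     (forall k, sing_pt t (P k)) /\
     (forall k l, proportional (P k) (P l) -> k = l) /\
     (forall x, sing_pt t x -> exists k, proportional (P k) x)) /\
  (forall x, sing_pt t x -> A1_pt t x) /\
  (forall x y, sing_pt t x -> sing_pt t y ->
     exists s : {perm 'I_5}, s \in ('Alt_('I_5))%g /\ proportional (fun i => x (s i)) y) /\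
  sing_pt t p.

(* Main.v *)
Require Import Defs.
From HB Require Import structures.
From mathcomp Require Import all_boot all_order all_algebra all_fingroup all_solvable.
From Stdlib Require Import Ring ZArith Lia FunctionalExtensionality.
Import GRing.Theory Num.Theory.
Local Open Scope ring_scope.
Set Implicit Arguments. Unset Strict Implicit. Unset Printing Implicit Defensive.

Section RingSetup.
Variable C : numClosedFieldType.
Definition cadd (x y : C) : C := x + y.
Definition cmul (x y : C) : C := x * y.
Definition copp (x : C) : C := - x.
Definition cexp (x : C) (n : nat) : C := x ^+ n.
Definition cnat (n : nat) : C := n%:R.
Definition czero : C := 0.
Definition cone : C := 1.

Lemma Rth : @ring_theory C czero cone cadd cmul (fun x y => cadd x (copp y)) copp eq.
Proof.
split=> *; rewrite /cadd /cmul /copp /czero /cone;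
 [exact: add0r|exact: addrC|exact: addrA|exact: mul1r|exact: mulrC|exact: mulrA|exact: mulrDl|done|exact: subrr].
Qed.
Definition phiZ (z : Z) : C := match z with Z0 => czero | Zpos p => cnat (Pos.to_nat p) | Zneg p => copp (cnat (Pos.to_nat p)) end.

Arguments phiZ : simpl never.
Lemma phiZ0 : phiZ 0 = 0. Proof. by []. Qed.
Lemma phiZ1 : phiZ 1 = 1. Proof. by []. Qed.
Lemma phiZm1 : phiZ (-1) = -1. Proof. by []. Qed.
Lemma phiZE z : phiZ z = (Z.to_nat z)%:R - (Z.to_nat (- z))%:R.
Proof. by case: z => [|p|p] /=; rewrite /czero /cnat /copp ?subr0 ?sub0r ?subrr. Qed.

Lemma nateq_sub (a b c d : nat) : (a + d = c + b)%nat -> (a%:R - b%:R : C) = c%:R - d%:R.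
Proof.
move=> h; apply: (addIr (b%:R + d%:R)).
have e1 : forall u v w : C, u - v + (v + w) = u + w by move=> u v w; rewrite addrA subrK.
have e2 : forall u v w : C, u - w + (v + w) = u + v by move=> u v w; rewrite [v + w]addrC e1.
by rewrite e1 e2 -!natrD h addnC.
Qed.

Lemma Rmorph : ring_morph czero cone cadd cmul (fun x y => cadd x (copp y)) copp eq
  0%Z 1%Z Z.add Z.mul Z.sub Z.opp Z.eqb phiZ.
Proof.
split=> //; rewrite /cadd /cmul /copp.
- move=> x y; rewrite !phiZE addrACA -opprD -!natrD; apply: nateq_sub; rewrite -!plusE; lia.
- move=> x y; rewrite !phiZE opprB addrACA -opprD -!natrD; apply: nateq_sub; rewrite -!plusE; lia.
- move=> x y; rewrite !phiZE mulrBl !mulrBr -!natrM opprB addrAC addrA -natrD -addrA -opprD -natrD.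
  apply: nateq_sub; rewrite -!plusE -!multE; destruct x, y; simpl; lia.
- by move=> x; rewrite !phiZE opprB Z.opp_involutive.
- by move=> x y /Z.eqb_eq ->.
Qed.

Lemma Rpow_th : power_theory cone cmul eq N.to_nat cexp.
Proof.
constructor=> x [|p] //=; rewrite /cexp /cmul; elim: p => [p IH|p IH|] //=.
- by rewrite Pos2Nat.inj_xI -IH -exprD -exprS multE mul2n addnn.
- by rewrite Pos2Nat.inj_xO -IH -exprD multE mul2n addnn.
Qed.

Lemma foldA (x y : C) : x + y = cadd x y. Proof. by []. Qed.
Lemma foldM (x y : C) : x * y = cmul x y. Proof. by []. Qed.
Lemma foldO (x : C) : - x = copp x. Proof. by []. Qed.
Lemma foldX (x : C) n : x ^+ n = cexp x n. Proof. by []. Qed.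
Lemma foldN (x : C) n : x *+ n = cmul x (cnat n). Proof. by rewrite /cmul /cnat mulr_natr. Qed.
Lemma to_sub (a b : C) : cadd a (copp b) = czero -> a = b.
Proof. by rewrite /cadd /copp /czero => /eqP; rewrite subr_eq0 => /eqP. Qed.
Lemma fold0 : (0 : C) = czero. Proof. by []. Qed.
Lemma fold1 : (1 : C) = cone. Proof. by []. Qed.

Lemma phiZ_add a b : phiZ (a + b) = phiZ a + phiZ b. Proof. exact: (morph_add Rmorph). Qed.
Lemma phiZ_mul a b : phiZ (a * b) = phiZ a * phiZ b. Proof. exact: (morph_mul Rmorph). Qed.
Lemma phiZ_sub a b : phiZ (a - b) = phiZ a - phiZ b. Proof. exact: (morph_sub Rmorph). Qed.
Lemma phiZ_opp a : phiZ (- a) = - phiZ a. Proof. exact: (morph_opp Rmorph). Qed.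
Lemma phiZ_inj a b : phiZ a = phiZ b -> a = b.
Proof.
move=> h; have : phiZ (a - b) = 0 by rewrite phiZ_sub h subrr.
rewrite phiZE => /eqP; rewrite subr_eq0 eqr_nat => /eqP; lia.
Qed.
End RingSetup.
Arguments phiZ : simpl never.

Ltac Cpow t := match isnatcst t with false => constr:(InitialRing.NotConstant) | _ => constr:(N.of_nat t) end.
Ltac Cconst t := match t with
 | czero _ => constr:(0%Z)
 | cone _ => constr:(1%Z)
 | cnat _ ?n => match isnatcst n with true => let z := eval compute in (Z.of_nat n) in constr:(z) | _ => constr:(InitialRing.NotConstant) end
 | _ => constr:(InitialRing.NotConstant)
 end.
Ltac cfold := rewrite ?foldN ?foldA ?foldM ?foldO ?foldX ?fold0 ?fold1.

Notation o0 := (@Ordinal 5 0 isT).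
Notation o1 := (@Ordinal 5 1 isT).
Notation o2 := (@Ordinal 5 2 isT).
Notation o3 := (@Ordinal 5 3 isT).
Notation o4 := (@Ordinal 5 4 isT).

Lemma sum5 (V : nmodType) (F : 'I_5 -> V) : \sum_(i < 5) F i = F o0 + F o1 + F o2 + F o3 + F o4.
Proof.
rewrite !big_ord_recl big_ord0 addr0 !addrA.
by congr (_ + _ + _ + _ + _); congr F; apply: val_inj.
Qed.

Lemma psumE (R : comNzRingType) k (x : 'I_5 -> R) :
  psum k x = x o0 ^+ k + x o1 ^+ k + x o2 ^+ k + x o3 ^+ k + x o4 ^+ k.
Proof. by rewrite /psum sum5. Qed.

Lemma ord5P (P : 'I_5 -> Prop) : P o0 -> P o1 -> P o2 -> P o3 -> P o4 -> forall i, P i.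
Proof.
move=> h0 h1 h2 h3 h4 [[|[|[|[|[|//]]]]] Hi];
 by [rewrite (bool_irrelevance Hi isT)].
Qed.


Section Main.
Variable C : numClosedFieldType.
Add Ring Cring : (Rth C) (morphism (Rmorph C), constants [Cconst], power_tac (Rpow_th C) [Cpow]).
Ltac cring := apply: to_sub; cfold; ring.

Implicit Types (x v w : 'I_5 -> C) (t u : C * C).

Lemma cM0 (p q : {poly C}) : (p * q)`_0 = p`_0 * q`_0.
Proof. by rewrite coefM big_ord1. Qed.
Lemma cM1 (p q : {poly C}) : (p * q)`_1 = p`_0 * q`_1 + p`_1 * q`_0.
Proof. by rewrite coefM !big_ord_recl big_ord0 addr0. Qed.
Lemma cM2 (p q : {poly C}) : (p * q)`_2 = p`_0 * q`_2 + p`_1 * q`_1 + p`_2 * q`_0.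
Proof. by rewrite coefM !big_ord_recl big_ord0 addr0 addrA. Qed.
Lemma lin0 (a b : C) : (a%:P + b%:P * 'X)`_0 = a.
Proof. by rewrite coefD coefC coefCM coefX mulr0 addr0. Qed.
Lemma lin1 (a b : C) : (a%:P + b%:P * 'X)`_1 = b.
Proof. by rewrite coefD coefC coefCM coefX mulr1 add0r. Qed.
Lemma lin2 (a b : C) : (a%:P + b%:P * 'X)`_2 = 0.
Proof. by rewrite coefD coefC coefCM coefX mulr0 addr0. Qed.
Lemma e2 (p : {poly C}) : p ^+ 2 = p * p. Proof. by rewrite expr2. Qed.
Lemma e4 (p : {poly C}) : p ^+ 4 = p * p * (p * p). Proof. by rewrite !exprS expr0 mulr1 !mulrA. Qed.

Ltac coefs := rewrite ?e2 ?e4; rewrite !(lin0, lin1, lin2, coefD, cM0, cM1, cM2).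

Definition gg t x (i : 'I_5) : C := t.1 * x i ^+ 3 + t.2 * psum 2 x * x i.
Definition dot5 (v h : 'I_5 -> C) : C := v o0 * h o0 + v o1 * h o1 + v o2 * h o2 + v o3 * h o3 + v o4 * h o4.
Definition const5 (h : 'I_5 -> C) := forall i j, h i = h j.

Lemma gline1 x v t u : (Gline x v t u)`_1 =
  4 * dot5 v (gg t x) + u.1 * psum 4 x + u.2 * psum 2 x ^+ 2.
Proof.
rewrite /Gline /Gform /= !psumE /=. coefs.
rewrite /dot5 /gg !psumE. cring.
Qed.
End Main.


Section B.
Variable C : numClosedFieldType.
Add Ring CringB : (Rth C) (morphism (Rmorph C), constants [Cconst], power_tac (Rpow_th C) [Cpow]).
Ltac cring := apply: to_sub; cfold; ring.
Implicit Types (x v w : 'I_5 -> C) (t u : C * C).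
Ltac coefs := rewrite ?e2 ?e4; rewrite !(lin0, lin1, lin2, coefD, cM0, cM1, cM2).

Definition Mw t x w (i : 'I_5) : C :=
  12 * t.1 * x i ^+ 2 * w i + 4 * t.2 * psum 2 x * w i + 8 * t.2 * x i * dot5 x w.

Lemma gline2 x v t : (Gline x v t (0, 0))`_2 =
  6 * t.1 * (x o0 ^+ 2 * v o0 ^+ 2 + x o1 ^+ 2 * v o1 ^+ 2 + x o2 ^+ 2 * v o2 ^+ 2 + x o3 ^+ 2 * v o3 ^+ 2 + x o4 ^+ 2 * v o4 ^+ 2)
  + t.2 * (2 * psum 2 x * psum 2 v + 4 * dot5 x v ^+ 2).
Proof.
rewrite /Gline /Gform /= !psumE /=. coefs.
rewrite /dot5 ?psumE /=. Time cring.
Qed.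

Lemma hessbE t x v w : hessb t x v w = dot5 v (Mw t x w).
Proof.
rewrite /hessb /hessq !gline2 /Mw /dot5 !psumE /=. Time cring.
Qed.

Lemma nat_neq0 n : (n.+1%:R : C) != 0.
Proof. by rewrite pnatr_eq0. Qed.

Lemma perpE (h : 'I_5 -> C) : (forall v, psum 1 v = 0 -> dot5 v h = 0) <-> const5 h.
Proof.
split=> [H|H v Hv].
- have K : forall i, h i = h o0.
    apply: ord5P => //.
    + have := H (vec5 (-1) 1 0 0 0); rewrite /dot5 psumE /vec5 /=.
      move=> H'; apply/eqP; rewrite -subr_eq0; apply/eqP; rewrite -H'; [cring|cring].
    + have := H (vec5 (-1) 0 1 0 0); rewrite /dot5 psumE /vec5 /=.
      move=> H'; apply/eqP; rewrite -subr_eq0; apply/eqP; rewrite -H'; [cring|cring].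
    + have := H (vec5 (-1) 0 0 1 0); rewrite /dot5 psumE /vec5 /=.
      move=> H'; apply/eqP; rewrite -subr_eq0; apply/eqP; rewrite -H'; [cring|cring].
    + have := H (vec5 (-1) 0 0 0 1); rewrite /dot5 psumE /vec5 /=.
      move=> H'; apply/eqP; rewrite -subr_eq0; apply/eqP; rewrite -H'; [cring|cring].
  by move=> i j; rewrite (K i) (K j).
- move: Hv; rewrite /dot5 psumE !(H _ o0) => Hv.
  transitivity ((v o0 ^+ 1 + v o1 ^+ 1 + v o2 ^+ 1 + v o3 ^+ 1 + v o4 ^+ 1) * h o0); first by cring.
  by rewrite Hv mul0r.
Qed.

Lemma sing_char t x : sing_pt t x <-> [/\ nonzero5 x, psum 1 x = 0 & const5 (gg t x)].
Proof.
split.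
- case=> nz [s1 [G H]]; split=> //; apply/perpE => v /H; rewrite gline1 /= !mul0r !addr0.
  by move/eqP; rewrite mulf_eq0 (negbTE (nat_neq0 3)) => /eqP.
- case=> nz s1 H; split=> //; split=> //; split.
  + have E : Gform x t = dot5 x (gg t x).
    case: {H} t => a b; rewrite /Gform /dot5 /gg !psumE /=; cring.
    by rewrite E; apply: (proj2 (perpE _) H x s1).
  + move=> v Hv; rewrite gline1 /= (proj2 (perpE _) H v Hv); cring.
Qed.
End B.


Section ZS.
Local Open Scope Z_scope.

Definition cZ1 (k : nat) : Z := match k with 0%nat => 1 | 1%nat => 0 | _ => -1 end.
Definition cZ2 (k : nat) : Z := match k with 0%nat => 0 | 1%nat => 1 | _ => -1 end.
Definition D1 (fs : seq nat) : Z := foldr (fun k s => cZ1 k + s) 0 fs.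
Definition D2 (fs : seq nat) : Z := foldr (fun k s => cZ2 k + s) 0 fs.
Definition zval (d1 d2 : Z) (k : nat) : Z := match k with 0%nat => d2 | 1%nat => - d1 | _ => d1 - d2 end.
Definition zvec (fs : seq nat) : seq Z := map (zval (D1 fs) (D2 fs)) fs.

Definition zs2 (z : seq Z) : Z :=
  nth 0 z 0 * nth 0 z 0 + nth 0 z 1 * nth 0 z 1 + nth 0 z 2 * nth 0 z 2 + nth 0 z 3 * nth 0 z 3 + nth 0 z 4 * nth 0 z 4.
Definition aZ (z : seq Z) (i : nat) : Z := nth 0 z i * nth 0 z i * nth 0 z i - nth 0 z 0 * nth 0 z 0 * nth 0 z 0.
Definition bZ (z : seq Z) (i : nat) : Z := zs2 z * (nth 0 z i - nth 0 z 0).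
Definition idx : seq nat := [:: 1; 2; 3; 4]%nat.
Definition allzero (z : seq Z) : bool := all (fun a => Z.eqb a 0) z.
Definition hasdet (z : seq Z) : bool :=
  has (fun i => has (fun j => negb (Z.eqb (aZ z i * bZ z j - aZ z j * bZ z i) 0)) idx) idx.
Definition tgt (a b : Z) : bool :=
  [|| Z.eqb (4 * a + (-1) * b) 0, Z.eqb (2 * a + (-1) * b) 0, Z.eqb (30 * a + (-7) * b) 0,
      Z.eqb (20 * a + (-13) * b) 0 | Z.eqb (0 * a + 1 * b) 0].
Definition hastgt (z : seq Z) : bool :=
  has (fun i => negb (Z.eqb (aZ z i) 0 && Z.eqb (bZ z i) 0) && tgt (aZ z i) (bZ z i)) idx.
Definition check1 (z : seq Z) : bool := [|| allzero z, hasdet z | hastgt z].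

Definition tpN (a b z : nat) : nat := if z == a then b else if z == b then a else z.
Definition Pz (pZ : seq Z) (tab : seq (nat * nat * nat * nat)) (k : nat) : seq Z :=
  let: (a, b, c, d) := nth (0, 1, 0, 1)%nat tab k in
  map (fun i => nth 0 pZ (tpN c d (tpN a b i))) (iota 0 5).
Definition cross (y z : seq Z) : bool :=
  all (fun i => all (fun j => Z.eqb (nth 0 y i * nth 0 z j) (nth 0 y j * nth 0 z i)) (iota 0 5)) (iota 0 5).
Definition singZ (A B : Z) (z : seq Z) : bool := all (fun i => Z.eqb (A * aZ z i + B * bZ z i) 0) idx.
Definition check2 (A B : Z) (pZ : seq Z) tab (z : seq Z) : bool :=
  [|| allzero z, negb (singZ A B z) | has (fun k => cross (Pz pZ tab k) z) (iota 0 (size tab))].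
Definition check3 (pZ : seq Z) tab : bool :=
  all (fun k => all (fun l => (k == l) || negb (cross (Pz pZ tab k) (Pz pZ tab l))) (iota 0 (size tab))) (iota 0 (size tab)).
Definition tabok (tab : seq (nat * nat * nat * nat)) : bool :=
  all (fun q => let: (a, b, c, d) := q in [&& a < 5, b < 5, c < 5, d < 5, a != b & c != d]%nat) tab.

Definition p1Z : seq Z := [:: 1; -1; 1; -1; 0].
Definition p2Z : seq Z := [:: 1; -1; 0; 0; 0].
Definition p3Z : seq Z := [:: 2; 2; 2; -3; -3].
Definition p4Z : seq Z := [:: 1; 1; 1; 1; -4].
Definition tab1 : seq (nat * nat * nat * nat) := [:: (0, 1, 0, 1); (0, 1, 0, 2); (0, 1, 0, 3); (0, 1, 0, 4); (0, 1, 1, 4); (0, 1, 2, 4); (0, 1, 3, 4); (0, 2, 0, 4); (0, 2, 1, 4); (0, 2, 2, 4); (0, 2, 3, 4); (0, 3, 0, 4); (0, 3, 1, 4); (0, 3, 2, 4); (0, 3, 3, 4)]%nat.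
Definition tab2 : seq (nat * nat * nat * nat) := [:: (0, 1, 0, 1); (0, 1, 0, 2); (0, 1, 0, 3); (0, 1, 0, 4); (0, 1, 1, 2); (0, 1, 1, 3); (0, 1, 1, 4); (0, 2, 1, 3); (0, 2, 1, 4); (0, 3, 1, 4)]%nat.
Definition tab3 : seq (nat * nat * nat * nat) := [:: (0, 1, 0, 1); (0, 1, 0, 3); (0, 1, 0, 4); (0, 1, 1, 3); (0, 1, 1, 4); (0, 1, 2, 3); (0, 1, 2, 4); (0, 3, 1, 4); (0, 3, 2, 4); (1, 3, 2, 4)]%nat.
Definition tab4 : seq (nat * nat * nat * nat) := [:: (0, 1, 0, 1); (0, 1, 0, 4); (0, 1, 1, 4); (0, 1, 2, 4); (0, 1, 3, 4)]%nat.

Definition goodfs (fs : seq nat) : bool :=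
  let z := zvec fs in
  [&& negb (Z.eqb (D1 fs) 0 && Z.eqb (D2 fs) 0), check1 z,
      check2 4 (-1) p1Z tab1 z, check2 2 (-1) p2Z tab2 z,
      check2 30 (-7) p3Z tab3 z & check2 20 (-13) p4Z tab4 z].

Lemma goodfs_all (f0 f1 f2 f3 f4 : nat) : (f0 < 3)%nat -> (f1 < 3)%nat -> (f2 < 3)%nat -> (f3 < 3)%nat -> (f4 < 3)%nat ->
  goodfs [:: f0; f1; f2; f3; f4].
Proof.
case: f0 => [|[|[|f0]]] // _; case: f1 => [|[|[|f1]]] // _; case: f2 => [|[|[|f2]]] // _;
case: f3 => [|[|[|f3]]] // _; case: f4 => [|[|[|f4]]] // _; vm_compute; reflexivity.
Qed.

Lemma statics : [&& tabok tab1, tabok tab2, tabok tab3, tabok tab4,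
  check3 p1Z tab1, check3 p2Z tab2, check3 p3Z tab3 & check3 p4Z tab4].
Proof. vm_compute; reflexivity. Qed.
End ZS.


Section Cl.
Variable C : numClosedFieldType.
Add Ring CringC : (Rth C) (morphism (Rmorph C), constants [Cconst], power_tac (Rpow_th C) [Cpow]).
Ltac cring := apply: to_sub; cfold; ring.
Implicit Types (x v w : 'I_5 -> C) (t u : C * C).

Definition zC (z : seq Z) : 'I_5 -> C := fun i => phiZ C (nth 0%Z z i).

Lemma lin3 (g e1 e2 e3 m1 m2 m3 : C) : e1 = 0 -> e2 = 0 -> e3 = 0 -> g = m1 * e1 + m2 * e2 + m3 * e3 -> g = 0.
Proof. by move=> -> -> -> ->; rewrite !mulr0 !addr0. Qed.

Lemma phiZ_neq0 z : z <> 0%Z -> phiZ C z != 0.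
Proof. by move=> hz; apply/eqP => h; apply: hz; apply: (@phiZ_inj C); rewrite h phiZ0. Qed.

Lemma solve_lin (d1 d2 r1 r2 : C) : d1 * r1 + d2 * r2 = 0 -> (d1 != 0) || (d2 != 0) ->
  exists r, r1 = r * d2 /\ r2 = - r * d1.
Proof.
move=> h; case: (eqVneq d2 0) => [d20|d20] /=.
- rewrite orbF => d10; move: h; rewrite d20 mul0r addr0 => /eqP; rewrite mulf_eq0 (negbTE d10) /= => /eqP r10.
  exists (- r2 / d1); rewrite r10 mulr0; split=> //; by rewrite mulNr divfK // opprK.
- move=> _; exists (r1 / d2); split; first by rewrite divfK.
  apply: (mulfI d20).
  apply/eqP; rewrite -subr_eq0; apply/eqP.
  apply: (lin3 (e1 := d1 * r1 + d2 * r2) (e2 := d2 * d2^-1 - 1) (e3 := 0) (m1 := 1) (m2 := d1 * r1) (m3 := 0)) => //.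
  - by rewrite mulfV // subrr.
  - cring.
Qed.

Lemma roots3 (a b : C) x : a != 0 -> psum 1 x = 0 -> const5 (gg (a, b) x) ->
  exists r1 r2 r3, r1 + r2 + r3 = 0 /\ forall i, x i = r1 \/ x i = r2 \/ x i = r3.
Proof.
move=> a0 s1 H.
have [q hq] : exists q, a * q = b * psum 2 x by exists (b * psum 2 x / a); rewrite mulrC divfK.
have [r2 hr2] : exists r2, r2 ^+ 2 + x o0 * r2 + (x o0 ^+ 2 + q) = 0.
  pose h := sqrtC (x o0 ^+ 2 - 4 * (x o0 ^+ 2 + q)).
  exists ((h - x o0) / 2).
  have e2r : 2 * ((h - x o0) / 2) = h - x o0 by rewrite mulrC divfK // (nat_neq0 C 1).
  have : 4 * (((h - x o0) / 2) ^+ 2 + x o0 * ((h - x o0) / 2) + (x o0 ^+ 2 + q)) = 0.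
    transitivity ((2 * ((h - x o0) / 2)) ^+ 2 + 2 * x o0 * (2 * ((h - x o0) / 2)) + 4 * (x o0 ^+ 2 + q)); first by cring.
    rewrite e2r; transitivity (h ^+ 2 - (x o0 ^+ 2 - 4 * (x o0 ^+ 2 + q))); first by cring.
    by rewrite sqrtCK subrr.
  by move/eqP; rewrite mulf_eq0 (negbTE (nat_neq0 C 3)) => /eqP.
exists (x o0), r2, (- x o0 - r2); split; first by cring.
move=> i.
have key : a * ((x i - x o0) * (x i - r2) * (x i - (- x o0 - r2))) = 0.
  apply: (lin3 (e1 := gg (a,b) x i - gg (a,b) x o0) (e2 := r2 ^+ 2 + x o0 * r2 + (x o0 ^+ 2 + q))
     (e3 := a * q - b * psum 2 x) (m1 := 1) (m2 := - a * (x i - x o0)) (m3 := x i - x o0)).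
  - by rewrite (H i o0) subrr.
  - exact: hr2.
  - by rewrite hq subrr.
  - rewrite /gg /=; cring.
move/eqP: key; rewrite mulf_eq0 (negbTE a0) /= !mulf_eq0 !subr_eq0 -orbA.
by case/or3P => /eqP ->; [left|right; left|right; right].
Qed.
End Cl.


Section Cl2.
Variable C : numClosedFieldType.
Add Ring CringD : (Rth C) (morphism (Rmorph C), constants [Cconst], power_tac (Rpow_th C) [Cpow]).
Ltac cring := apply: to_sub; cfold; ring.
Implicit Types (x v w : 'I_5 -> C) (t : C * C).

Lemma classify (a b : C) x : a != 0 -> sing_pt (a, b) x ->
  exists f0 f1 f2 f3 f4 : nat, [/\ (f0 < 3)%nat, (f1 < 3)%nat, (f2 < 3)%nat, (f3 < 3)%nat & (f4 < 3)%nat] /\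
   exists r, r != 0 /\ forall i, x i = r * zC C (zvec [:: f0; f1; f2; f3; f4]) i.
Proof.
move=> a0 /sing_char [nz s1 H].
have [r1 [r2 [r3 [h3 hx]]]] := roots3 a0 s1 H.
have e3 : r3 = - r1 - r2 by apply/eqP; rewrite -subr_eq0; apply/eqP; rewrite -h3; cring.
pose fi (i : 'I_5) : nat := if x i == r1 then 0%nat else if x i == r2 then 1%nat else 2%nat.
pose R (k : nat) := match k with 0%nat => r1 | 1%nat => r2 | _ => r3 end.
have hR : forall i, x i = R (fi i).
  move=> i; rewrite /fi; case: eqP => [//|n1]; case: eqP => [//|n2].
  by case: (hx i) => [//|[//|->]].
have hfi : forall i, (fi i < 3)%nat by move=> i; rewrite /fi; case: (x i == r1); case: (x i == r2).
exists (fi o0), (fi o1), (fi o2), (fi o3), (fi o4); split; first by split.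
set fs := [:: fi o0; fi o1; fi o2; fi o3; fi o4].
have good := @goodfs_all _ _ _ _ _ (hfi o0) (hfi o1) (hfi o2) (hfi o3) (hfi o4).
rewrite -/fs in good.
have hR2 : forall k, R k = phiZ C (cZ1 k) * r1 + phiZ C (cZ2 k) * r2.
  by case=> [|[|k]] /=; rewrite ?phiZ0 ?phiZ1 ?phiZm1 ?e3; cring.
have sum0 : phiZ C (D1 fs) * r1 + phiZ C (D2 fs) * r2 = 0.
  rewrite -s1 /D1 /D2 /= !phiZ_add !phiZ0 psumE !expr1 (hR o0) (hR o1) (hR o2) (hR o3) (hR o4) !hR2.
  cring.
have DD : (phiZ C (D1 fs) != 0) || (phiZ C (D2 fs) != 0).
  case/and3P: good => dd _ _.
  case: (Z.eqb_spec (D1 fs) 0) dd => [d1|d1] dd; last by rewrite (@phiZ_neq0 C _ d1).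
  case: (Z.eqb_spec (D2 fs) 0) dd => [d2|d2] //= _; by rewrite (@phiZ_neq0 C _ d2) orbT.
have [r [hr1 hr2]] := solve_lin sum0 DD.
have hz : forall k, R k = r * phiZ C (zval (D1 fs) (D2 fs) k).
  case=> [|[|k]].
  - by change (r1 = r * phiZ C (D2 fs)); rewrite hr1.
  - change (r2 = r * phiZ C (- D1 fs)); rewrite phiZ_opp hr2; cring.
  - change (r3 = r * phiZ C (D1 fs - D2 fs)); rewrite phiZ_sub e3 hr1 hr2; cring.
have hxz : forall i, x i = r * zC C (zvec fs) i.
  by apply: ord5P; rewrite /zC hR hz.
exists r; split=> //.
apply/eqP => r0; case: nz => i; rewrite hxz r0 mul0r; by rewrite eqxx.
Qed.
End Cl2.


Section P1.
Variable C : numClosedFieldType.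
Add Ring CringE : (Rth C) (morphism (Rmorph C), constants [Cconst], power_tac (Rpow_th C) [Cpow]).
Ltac cring := apply: to_sub; cfold; ring.
Implicit Types (x v w : 'I_5 -> C) (t : C * C).

Lemma transfer (a b al be A B : C) : a * al + b * be = 0 -> A * al + B * be = 0 ->
  (al != 0) || (be != 0) -> a * B = b * A.
Proof.
move=> h1 h2 nz; apply/eqP; rewrite -subr_eq0; apply/eqP.
have k1 : al * (a * B - b * A) = 0.
  apply: (lin3 (e1 := a * al + b * be) (e2 := A * al + B * be) (e3 := 0) (m1 := B) (m2 := - b) (m3 := 0)) => //; cring.
have k2 : be * (a * B - b * A) = 0.
  apply: (lin3 (e1 := a * al + b * be) (e2 := A * al + B * be) (e3 := 0) (m1 := - A) (m2 := a) (m3 := 0)) => //; cring.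
case/orP: nz => nz.
- by move/eqP: k1; rewrite mulf_eq0 (negbTE nz) => /eqP.
- by move/eqP: k2; rewrite mulf_eq0 (negbTE nz) => /eqP.
Qed.

Lemma transfer2 (a b al be A B : C) : B != 0 -> a * B = b * A -> A * al + B * be = 0 -> a * al + b * be = 0.
Proof.
move=> B0 h1 h2.
have k : B * (a * al + b * be) = 0.
  apply: (lin3 (e1 := a * B - b * A) (e2 := A * al + B * be) (e3 := 0) (m1 := al) (m2 := b) (m3 := 0)) => //.
  - by rewrite h1 subrr.
  - cring.
by move/eqP: k; rewrite mulf_eq0 (negbTE B0) => /eqP.
Qed.

Lemma zC_eq (z : seq Z) a b : const5 (gg (a, b) (zC C z)) -> forall i, (i < 5)%nat ->
  a * phiZ C (aZ z i) + b * phiZ C (bZ z i) = 0.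
Proof.
move=> H i hi; have := H (Ordinal hi) o0.
rewrite /gg psumE /zC /= => /eqP; rewrite -subr_eq0 => /eqP h.
rewrite /aZ /bZ /zs2 ?(phiZ_sub, phiZ_mul, phiZ_add, phiZ_opp).
apply: (lin3 (m1 := 1) (m2 := 0) (m3 := 0) h (erefl 0) (erefl 0)); cring.
Qed.

Lemma idx5 i : i \in idx -> (i < 5)%nat.
Proof. by rewrite /idx !inE; case/or4P => /eqP ->. Qed.

Lemma allzero_nth (z : seq Z) i : allzero z -> nth 0%Z z i = 0%Z.
Proof.
rewrite /allzero; elim: z i => [|a z IH] [|i] //=; case/andP => /Z.eqb_spec h1 h2 //.
exact: IH.
Qed.

Lemma nz_notallzero (z : seq Z) : nonzero5 (zC C z) -> ~~ allzero z.
Proof.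
case=> i; rewrite /zC; apply: contra => hz.
by rewrite (allzero_nth _ hz) phiZ0.
Qed.

Lemma use1 (z : seq Z) a b : a != 0 -> nonzero5 (zC C z) -> const5 (gg (a, b) (zC C z)) -> check1 z ->
  same_P1 (a, b) 4 (-1) \/ same_P1 (a, b) 2 (-1) \/ same_P1 (a, b) 30 (-7) \/
       same_P1 (a, b) 20 (-13) \/ same_P1 (a, b) 0 1.
Proof.
move=> a0 nz H; case/or3P.
- by move=> hz; move: (nz_notallzero nz); rewrite hz.
- case/hasP => i hi /hasP [j hj /negP hdet]; exfalso; apply: hdet; apply/Z.eqb_spec.
  have ei := zC_eq H (idx5 hi); have ej := zC_eq H (idx5 hj).
  apply: (@phiZ_inj C); rewrite phiZ0 phiZ_sub 2!phiZ_mul.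
  have : a * (phiZ C (aZ z i) * phiZ C (bZ z j) - phiZ C (aZ z j) * phiZ C (bZ z i)) = 0.
    apply: (lin3 (e1 := a * phiZ C (aZ z i) + b * phiZ C (bZ z i)) (e2 := a * phiZ C (aZ z j) + b * phiZ C (bZ z j))
      (e3 := 0) (m1 := phiZ C (bZ z j)) (m2 := - phiZ C (bZ z i)) (m3 := 0)) => //; cring.
  by move/eqP; rewrite mulf_eq0 (negbTE a0) => /eqP.
- case/hasP => i hi /andP [hnz ht].
  have ei := zC_eq H (idx5 hi).
  have nz2 : (phiZ C (aZ z i) != 0) || (phiZ C (bZ z i) != 0).
    case: (Z.eqb_spec (aZ z i) 0) hnz => [d1|d1] hnz; last by rewrite (@phiZ_neq0 C _ d1).
    case: (Z.eqb_spec (bZ z i) 0) hnz => [d2|d2] //= _; by rewrite (@phiZ_neq0 C _ d2) orbT.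
  have tr : forall A B : Z, Z.eqb (A * aZ z i + B * bZ z i) 0 -> a * phiZ C B = b * phiZ C A.
    move=> A B /Z.eqb_spec h; apply: (transfer ei _ nz2).
    by rewrite -!phiZ_mul -phiZ_add h phiZ0.
  case/orP: ht => [/tr h|]; first by left.
  case/orP => [/tr h|]; first by right; left.
  case/orP => [/tr h|]; first by right; right; left.
  case/orP => [/tr h|/tr h]; first by right; right; right; left.
  by right; right; right; right.
Qed.
End P1.


Section P1b.
Variable C : numClosedFieldType.
Add Ring CringF : (Rth C) (morphism (Rmorph C), constants [Cconst], power_tac (Rpow_th C) [Cpow]).
Ltac cring := apply: to_sub; cfold; ring.
Implicit Types (x v w : 'I_5 -> C) (t : C * C).

Lemma gg_scale t r x y i : (forall i, x i = r * y i) -> gg t x i = r ^+ 3 * gg t y i.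
Proof. by move=> hx; rewrite /gg !psumE !hx; case: t => a b /=; cring. Qed.

Lemma const5_scale t r x y : r != 0 -> (forall i, x i = r * y i) -> const5 (gg t x) -> const5 (gg t y).
Proof.
move=> r0 hx H i j; have := H i j; rewrite !(gg_scale t i hx) !(gg_scale t j hx).
by apply: mulfI; rewrite expf_neq0.
Qed.

Lemma sing_from (a b A B : C) y : B != 0 -> a * B = b * A -> nonzero5 y -> psum 1 y = 0 ->
   (forall i, A * (y i ^+ 3 - y o0 ^+ 3) + B * (psum 2 y * (y i - y o0)) = 0) -> sing_pt (a, b) y.
Proof.
move=> B0 hab nz s1 hy; apply/sing_char; split=> //.
have K : forall i, gg (a, b) y i = gg (a, b) y o0.
  move=> i; apply/eqP; rewrite -subr_eq0; apply/eqP.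
  apply: (lin3 (m1 := 1) (m2 := 0) (m3 := 0) (transfer2 B0 hab (hy i)) (erefl 0) (erefl 0)).
  rewrite /gg !psumE /=; cring.
by move=> i j; rewrite (K i) (K j).
Qed.

Lemma nz_vec5 (a b c d e : C) : a != 0 -> nonzero5 (vec5 a b c d e).
Proof. by move=> a0; exists o0. Qed.

Lemma part1 t : t != (0, 0) ->
     ((exists x, sing_pt t x) <->
      (same_P1 t 4 (-1) \/ same_P1 t 2 (-1) \/ same_P1 t 30 (-7) \/
       same_P1 t 20 (-13) \/ same_P1 t 0 1)).
Proof.
case: t => a b nt; split.
- case=> x hs; case: (eqVneq a 0) => [a0|a0].
  + by right; right; right; right; rewrite /same_P1 /= a0 mul0r mulr0.
  + have [f0 [f1 [f2 [f3 [f4 [[h0 h1 h2 h3 h4] [r [r0 hx]]]]]]]] := classify a0 hs.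
    have good := @goodfs_all _ _ _ _ _ h0 h1 h2 h3 h4.
    case/andP: good => _ /andP [c1 _].
    case/sing_char: hs => nz s1 H.
    apply: (use1 a0 _ (const5_scale r0 hx H) c1).
    case: nz => i; rewrite hx => h; exists i; apply: contra h => /eqP ->; by rewrite mulr0.
- have ev : forall y : 'I_5 -> C, y o0 = vec5 (y o0) (y o1) (y o2) (y o3) (y o4) o0 by [].
  case=> [h|[h|[h|[h|h]]]].
  + exists (vec5 1 (-1) 1 (-1) 0); apply: (sing_from (A := 4) (B := -1)) => //.
    * by rewrite oppr_eq0 oner_neq0.
    * exact: nz_vec5 (oner_neq0 _).
    * rewrite psumE /vec5 /=; cring.
    * apply: ord5P; rewrite psumE /vec5 /=; cring.
  + exists (vec5 1 (-1) 0 0 0); apply: (sing_from (A := 2) (B := -1)) => //.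
    * by rewrite oppr_eq0 oner_neq0.
    * exact: nz_vec5 (oner_neq0 _).
    * rewrite psumE /vec5 /=; cring.
    * apply: ord5P; rewrite psumE /vec5 /=; cring.
  + exists (vec5 2 2 2 (-3) (-3)); apply: (sing_from (A := 30) (B := -7)) => //.
    * by rewrite oppr_eq0 (nat_neq0 C 6).
    * exact: nz_vec5 (nat_neq0 C 1).
    * rewrite psumE /vec5 /=; cring.
    * apply: ord5P; rewrite psumE /vec5 /=; cring.
  + exists (vec5 1 1 1 1 (-4)); apply: (sing_from (A := 20) (B := -13)) => //.
    * by rewrite oppr_eq0 (nat_neq0 C 12).
    * exact: nz_vec5 (oner_neq0 _).
    * rewrite psumE /vec5 /=; cring.
    * apply: ord5P; rewrite psumE /vec5 /=; cring.
  + have a0 : a = 0 by move: h; rewrite /same_P1 /= mulr1 mulr0.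
    exists (vec5 1 'i (-1) (- 'i) 0).
    have s2 : psum 2 (vec5 1 'i (-1) (- 'i) 0 : 'I_5 -> C) = 0.
      rewrite psumE /vec5 /=.
      apply: (lin3 (m1 := 2) (m2 := 0) (m3 := 0) (e1 := 'i ^+ 2 + 1) _ (erefl 0) (erefl 0)).
      * by rewrite sqrCi addNr.
      * cring.
    apply/sing_char; split.
    * exact: nz_vec5 (oner_neq0 _).
    * rewrite psumE /vec5 /=; cring.
    * by move=> i j; rewrite /gg s2 a0 /= !(mul0r, mulr0, add0r).
Qed.
End P1b.


Lemma part6 (R : comNzRingType) (x : 'I_5 -> R) : Gform x (0, 1) = psum 2 x ^+ 2.
Proof. by rewrite /Gform /= mul0r add0r mul1r. Qed.

Section P78.
Variable C : numClosedFieldType.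
Add Ring CringG : (Rth C) (morphism (Rmorph C), constants [Cconst], power_tac (Rpow_th C) [Cpow]).
Ltac cring := apply: to_sub; cfold; ring.
Implicit Types (x v w : 'I_5 -> C) (t : C * C).

Lemma all_eq0 x c : (forall i, x i = c) -> psum 1 x = 0 -> forall i, x i = 0.
Proof.
move=> h s1 i; rewrite h; move: s1; rewrite psumE !expr1 !h.
have -> : c + c + c + c + c = 5 * c by cring.
by move/eqP; rewrite mulf_eq0 (negbTE (nat_neq0 C 4)) => /eqP.
Qed.

Lemma part7 x : nonzero5 x -> psum 1 x = 0 -> (sing_pt (0, 1) x <-> psum 2 x = 0).
Proof.
move=> nz s1; split.
- case/sing_char => _ _ H; case: (eqVneq (psum 2 x) 0) => // s0; exfalso.
  have K : forall i, x i = x o0.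
    move=> i; apply: (mulfI s0); have := H i o0; rewrite /gg /= => h.
    by apply/eqP; rewrite -subr_eq0; apply/eqP; move: h => /eqP; rewrite -subr_eq0 => /eqP h; rewrite -h; cring.
  by case: nz => i; rewrite (all_eq0 K s1 i) eqxx.
- move=> s2; apply/sing_char; split=> // i j; by rewrite /gg s2 /= !(mul0r, mulr0, add0r).
Qed.

Lemma part8 x t : nonzero5 x -> t != (0, 0) ->
     (total_sing_pt x t <-> [/\ same_P1 t 0 1, psum 1 x = 0, psum 2 x = 0 & psum 4 x = 0]).
Proof.
move=> nz nt; split.
- case=> _ [_ [s1 [G H]]].
  have v0 : psum 1 (fun _ : 'I_5 => 0 : C) = 0 by rewrite psumE !expr1 !addr0.
  have s4 : psum 4 x = 0.
    by have := H _ (1, 0) v0; rewrite gline1 /dot5 /= !(mul0r, mulr0, add0r, addr0, mul1r).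
  have s2 : psum 2 x = 0.
    have := H _ (0, 1) v0; rewrite gline1 /dot5 /= !(mul0r, mulr0, add0r, addr0, mul1r) => /eqP.
    by rewrite expf_eq0 /= => /eqP.
  have cst : const5 (gg t x).
    apply/perpE => v hv; have := H v (0, 0) hv; rewrite gline1 /= !(mul0r, addr0) => /eqP.
    by rewrite mulf_eq0 (negbTE (nat_neq0 C 3)) => /eqP.
  split=> //.
  case: t nt cst G H => a b nt cst _ _; rewrite /same_P1 /= mulr1 mulr0.
  case: (eqVneq a 0) => // a0; exfalso.
  have hs : sing_pt (a, 0) x.
    apply/sing_char; split=> // i j; have := cst i j; by rewrite /gg s2 /= !(mul0r, mulr0, addr0).
  have nt' : (a, 0) != (0, 0) :> C * C by apply: contra a0 => /eqP [->].
  have := proj1 (part1 nt') (ex_intro _ x hs); rewrite /same_P1 /= !mul0r.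
  have hh : forall B : C, B != 0 -> a * B = 0 -> False.
    by move=> B B0 /eqP; rewrite mulf_eq0 (negbTE a0) (negbTE B0).
  case=> [|[|[|[|]]]] /hh; apply.
  + by rewrite oppr_eq0 oner_neq0.
  + by rewrite oppr_eq0 oner_neq0.
  + by rewrite oppr_eq0 (nat_neq0 C 6).
  + by rewrite oppr_eq0 (nat_neq0 C 12).
  + exact: oner_neq0.
- case; case: t nt => a b nt; rewrite /same_P1 /= mulr1 mulr0 => a0 s1 s2 s4.
  split=> //; split=> //; split=> //; split.
  + by rewrite /Gform /= a0 s2 s4 !(mul0r, mulr0, add0r, expr0n).
  + move=> v u hv; rewrite gline1 s2 s4 /dot5 /gg s2 a0 /=.
    by rewrite !(mul0r, mulr0, add0r, addr0, expr0n).
Qed.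
End P78.


Section Inv.
Variable C : numClosedFieldType.
Add Ring CringH : (Rth C) (morphism (Rmorph C), constants [Cconst], power_tac (Rpow_th C) [Cpow]).
Ltac cring := apply: to_sub; cfold; ring.
Implicit Types (x v w : 'I_5 -> C) (t : C * C).

Lemma psum_perm k x (s : {perm 'I_5}) : psum k (fun i => x (s i)) = psum k x.
Proof. by rewrite /psum [in RHS](reindex_inj (@perm_inj _ s)). Qed.

Lemma dot5E v h : dot5 v h = \sum_(i < 5) v i * h i.
Proof. by rewrite sum5. Qed.

Lemma dot5_perm v h (s : {perm 'I_5}) : dot5 (fun i => v (s i)) (fun i => h (s i)) = dot5 v h.
Proof. by rewrite !dot5E [in RHS](reindex_inj (@perm_inj _ s)). Qed.

Lemma nz_perm x (s : {perm 'I_5}) : nonzero5 x -> nonzero5 (fun i => x (s i)).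
Proof. by case=> i hi; exists (s^-1 i)%g; rewrite permKV. Qed.

Lemma gg_perm t x (s : {perm 'I_5}) i : gg t (fun i => x (s i)) i = gg t x (s i).
Proof. by rewrite /gg psum_perm. Qed.

Lemma sing_perm t x (s : {perm 'I_5}) : sing_pt t x -> sing_pt t (fun i => x (s i)).
Proof.
case/sing_char => nz s1 H; apply/sing_char; split.
- exact: nz_perm.
- by rewrite psum_perm.
- by move=> i j; rewrite !gg_perm.
Qed.

Lemma Mw_perm t x w (s : {perm 'I_5}) i :
  Mw t (fun i => x (s i)) w i = Mw t x (fun j => w ((s^-1)%g j)) (s i).
Proof.
rewrite /Mw /= psum_perm permK; congr (_ + _ * _).
rewrite -[in RHS](dot5_perm _ _ s); congr dot5; apply: functional_extensionality => j /=; by rewrite permK.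
Qed.

Lemma hessb_perm t x v w (s : {perm 'I_5}) :
  hessb t (fun i => x (s i)) v w = hessb t x (fun j => v ((s^-1)%g j)) (fun j => w ((s^-1)%g j)).
Proof.
rewrite !hessbE -[in RHS](dot5_perm _ _ s); congr dot5.
- by apply: functional_extensionality => j /=; rewrite permK.
- by apply: functional_extensionality => j /=; rewrite Mw_perm.
Qed.

Lemma A1_perm t x (s : {perm 'I_5}) : A1_pt t x -> A1_pt t (fun i => x (s i)).
Proof.
case=> hs H; split; first exact: sing_perm.
move=> w hw hv.
have [c hc] : exists c, forall i, w ((s^-1)%g i) = c * x i.
  apply: H.
  - by rewrite psum_perm.
  - move=> v hv'.
    have := hv (fun i => v (s i)); rewrite psum_perm => /(_ hv').
    rewrite hessb_perm; congr (hessb _ _ _ _ = 0); apply: functional_extensionality => j; by rewrite permKV.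
by exists c => i; rewrite -hc permK.
Qed.

Lemma hessb_scale t x v w c : hessb t (fun i => c * x i) v w = c ^+ 2 * hessb t x v w.
Proof. rewrite !hessbE /dot5 /Mw /dot5 !psumE; case: t => a b /=; cring. Qed.

Lemma sing_scale t x c : c != 0 -> sing_pt t x -> sing_pt t (fun i => c * x i).
Proof.
move=> c0 /sing_char [[i hi] s1 H]; apply/sing_char; split.
- by exists i; rewrite mulf_neq0.
- have -> : psum 1 (fun i => c * x i) = c * psum 1 x by rewrite !psumE; cring.
  by rewrite s1 mulr0.
- move=> i0 j; rewrite !(@gg_scale C t c (fun i => c * x i) x) //.
  by rewrite (H i0 j).
Qed.

Lemma A1_scale t x c : c != 0 -> A1_pt t x -> A1_pt t (fun i => c * x i).
Proof.
move=> c0 [hs H]; split; first exact: sing_scale.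
move=> w hw hv.
have [d hd] : exists d, forall i, w i = d * x i.
  apply: H => // v hv'; have := hv v hv'; rewrite hessb_scale => /eqP.
  by rewrite mulf_eq0 expf_eq0 (negbTE c0) /= => /eqP.
exists (d / c) => i; rewrite hd mulrA divfK //.
Qed.

Lemma prop_sym x y : proportional x y -> proportional y x.
Proof.
case=> c [c0 h]; exists c^-1; split; first by rewrite invr_eq0.
by move=> i; rewrite h mulrA mulVf // mul1r.
Qed.

Lemma prop_trans x y z : proportional x y -> proportional y z -> proportional x z.
Proof.
case=> c [c0 h] [d [d0 h']]; exists (d * c); split; first by rewrite mulf_neq0.
by move=> i; rewrite h' h mulrA.
Qed.

Lemma A1_prop t x y : A1_pt t x -> proportional x y -> A1_pt t y.
Proof.
move=> hx [c [c0 h]].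
have -> : y = (fun i => c * x i) by apply: functional_extensionality => i; rewrite h.
exact: A1_scale.
Qed.

Lemma sing_prop t x y : sing_pt t x -> proportional x y -> sing_pt t y.
Proof.
move=> hx [c [c0 h]].
have -> : y = (fun i => c * x i) by apply: functional_extensionality => i; rewrite h.
exact: sing_scale.
Qed.

Lemma cross_eq (y z : seq Z) : cross y z -> forall i j : 'I_5, zC C y i * zC C z j = zC C y j * zC C z i.
Proof.
rewrite /cross => /allP h i j.
have := h (val i); rewrite mem_iota add0n ltn_ord => /(_ isT) /allP /(_ (val j)).
rewrite mem_iota add0n ltn_ord => /(_ isT) /Z.eqb_spec e.
by rewrite /zC -!phiZ_mul e.
Qed.

Lemma cross_prop (y z : seq Z) : cross y z -> nonzero5 (zC C y) -> nonzero5 (zC C z) ->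
  proportional (zC C y) (zC C z).
Proof.
move=> cr [i0 hi0] nzz.
have e := cross_eq cr.
have hz : forall j, zC C z j = (zC C z i0 / zC C y i0) * zC C y j.
  move=> j; apply: (mulfI hi0); rewrite (e i0 j).
  transitivity (zC C y i0 / zC C y i0 * (zC C z i0 * zC C y j)); last by cring.
  by rewrite divff // mul1r mulrC.
exists (zC C z i0 / zC C y i0); split=> //.
apply: mulf_neq0; last by rewrite invr_eq0.
apply/eqP => z0; case: nzz => j; by rewrite hz z0 !mul0r eqxx.
Qed.

Lemma prop_cross (y z : seq Z) : proportional (zC C y) (zC C z) -> cross y z.
Proof.
case=> c [c0 h]; rewrite /cross; apply/allP => i; rewrite mem_iota add0n => hi.
apply/allP => j; rewrite mem_iota add0n => hj; apply/Z.eqb_spec.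
apply: (@phiZ_inj C); rewrite !phiZ_mul.
have := h (Ordinal hi); have := h (Ordinal hj); rewrite /zC /= => -> ->.
cring.
Qed.
End Inv.


Definition sig4 (q : nat * nat * nat * nat) : {perm 'I_5} :=
  let: (a, b, c, d) := q in (tperm (inord a) (inord b) * tperm (inord c) (inord d))%g.
Definition qok (q : nat * nat * nat * nat) : bool :=
  let: (a, b, c, d) := q in [&& a < 5, b < 5, c < 5, d < 5, a != b & c != d]%nat.

Lemma tpermV (x y z : 'I_5) : val (tperm x y z) = tpN x y z.
Proof.
rewrite /tpN; case: tpermP => [->|->|nx ny]; first by rewrite eqxx.
- by case: eqP => [->|_]; rewrite ?eqxx.
- have /negbTE -> : val z != val x by apply/eqP => /val_inj.
  by have /negbTE -> : val z != val y by apply/eqP => /val_inj.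
Qed.

Lemma sig4_val q i : qok q -> val (sig4 q i) = let: (a, b, c, d) := q in tpN c d (tpN a b (val i)).
Proof.
case: q => [[[a b] c] d] /and5P [ha hb hc hd _].
by rewrite /sig4 permM !tpermV !inordK.
Qed.

Lemma sig4_even q : qok q -> sig4 q \in ('Alt_('I_5))%g.
Proof.
case: q => [[[a b] c] d] /and5P [ha hb hc hd /andP [hab hcd]].
have ne : forall u v : nat, (u < 5)%nat -> (v < 5)%nat -> u != v -> (inord u != inord v :> 'I_5).
  move=> u v hu hv; apply: contra => /eqP h; apply/eqP; have := congr1 (@nat_of_ord 5) h; rewrite !inordK //.
by rewrite Alt_even /sig4 odd_permM !odd_tperm !ne.
Qed.

Section Nodal.
Variable C : numClosedFieldType.
Implicit Types (x v w : 'I_5 -> C) (t : C * C).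

Lemma nodal_gen (A B : Z) (pZ : seq Z) tab (p : 'I_5 -> C) :
  tabok tab -> check3 pZ tab ->
  (forall f0 f1 f2 f3 f4 : nat, (f0 < 3)%nat -> (f1 < 3)%nat -> (f2 < 3)%nat -> (f3 < 3)%nat -> (f4 < 3)%nat ->
     check2 A B pZ tab (zvec [:: f0; f1; f2; f3; f4])) ->
  (forall i, p i = zC C pZ i) ->
  phiZ C A != 0 ->
  A1_pt (phiZ C A, phiZ C B) p ->
  nodal_config (phiZ C A, phiZ C B) (size tab) p.
Proof.
move=> tok c3 H2 hp hA hA1.
have hs := proj1 hA1.
pose sg (k : 'I_(size tab)) := sig4 (nth (0, 1, 0, 1)%nat tab k).
have qk : forall k : 'I_(size tab), qok (nth (0, 1, 0, 1)%nat tab k).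
  move=> k; move/allP: tok => /(_ _ (mem_nth (0, 1, 0, 1)%nat (ltn_ord k))).
  by case: (nth _ tab k) => [[[a b] c] d].
pose P (k : 'I_(size tab)) := fun i => p (sg k i).
have PZ : forall k : 'I_(size tab), P k = zC C (Pz pZ tab k).
  move=> k; apply: functional_extensionality => i; rewrite /P hp /zC; congr (phiZ C _).
  rewrite /Pz /sg; move: (qk k); case: (nth _ tab k) => [[[a b] c] d] hq.
  rewrite (sig4_val _ hq) (nth_map 0%nat) ?size_iota ?ltn_ord // nth_iota ?ltn_ord //.
have Psing : forall k, sing_pt (phiZ C A, phiZ C B) (P k) by move=> k; exact: sing_perm.
have PA1 : forall k, A1_pt (phiZ C A, phiZ C B) (P k) by move=> k; exact: A1_perm.
have cover : forall x, sing_pt (phiZ C A, phiZ C B) x -> exists k, proportional (P k) x.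
  move=> x hx.
  have [f0 [f1 [f2 [f3 [f4 [[h0 h1 h2 h3 h4] [r [r0 hxr]]]]]]]] := classify hA hx.
  have c2 := H2 _ _ _ _ _ h0 h1 h2 h3 h4.
  set z := zvec [:: f0; f1; f2; f3; f4] in hxr c2.
  have nzz : nonzero5 (zC C z).
    case/sing_char: hx => [[i hi] _ _]; exists i; move: hi; rewrite hxr; apply: contra => /eqP ->.
    by rewrite mulr0.
  have Hz : const5 (gg (phiZ C A, phiZ C B) (zC C z)).
    by case/sing_char: hx => _ _ Hx; exact: const5_scale r0 hxr Hx.
  case/or3P: c2.
  - by move=> hz; move: (nz_notallzero nzz); rewrite hz.
  - move/negP => [].
    rewrite /singZ; apply/allP => i hi; apply/Z.eqb_spec; apply: (@phiZ_inj C).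
    rewrite phiZ0 phiZ_add 2!phiZ_mul; exact: zC_eq Hz _ (idx5 hi).
  - case/hasP => k; rewrite mem_iota add0n => hk cr.
    exists (Ordinal hk); rewrite PZ.
    apply: (prop_trans (cross_prop cr _ nzz)).
    + by rewrite -(PZ (Ordinal hk)); case/sing_char: (Psing (Ordinal hk)).
    + by exists r; split=> // i; rewrite hxr.
split.
- exists P; split=> //; split=> //.
  move=> k l hkl; apply: val_inj => /=.
  move: hkl; rewrite !PZ => /prop_cross hc.
  move/allP: c3 => /(_ k); rewrite mem_iota add0n ltn_ord => /(_ isT) /allP /(_ l).
  rewrite mem_iota add0n ltn_ord => /(_ isT); rewrite hc orbF => /eqP.
  done.
split.
- by move=> x hx; have [k hk] := cover x hx; exact: A1_prop (PA1 k) hk.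
split=> //.
move=> x y hx hy.
have [k [c1 [c10 hk]]] := cover x hx; have [l hl] := cover y hy.
exists (sg l * (sg k)^-1)%g; split.
- by rewrite groupM ?groupV // sig4_even.
- apply: (prop_trans _ hl); apply: prop_sym.
  exists c1; split=> // i; rewrite hk /P permM permKV //.
Qed.
End Nodal.


Section A1s.
Variable C : numClosedFieldType.
Add Ring CringJ : (Rth C) (morphism (Rmorph C), constants [Cconst], power_tac (Rpow_th C) [Cpow]).
Ltac cring := apply: to_sub; cfold; ring.

Lemma lin5 (g e0 e1 e2 e3 e4 m0 m1 m2 m3 m4 : C) : e0 = 0 -> e1 = 0 -> e2 = 0 -> e3 = 0 -> e4 = 0 ->
  g = m0 * e0 + m1 * e1 + m2 * e2 + m3 * e3 + m4 * e4 -> g = 0.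
Proof. by move=> -> -> -> -> -> ->; rewrite !mulr0 !addr0. Qed.

Lemma A1_1 : A1_pt ((4, (-1)) : C * C) (vec5 1 (-1) 1 (-1) 0 : 'I_5 -> C).
Proof.
split.
- apply: (sing_from (A := 4) (B := (-1))) => //.
  * by rewrite oppr_eq0 oner_neq0.
  * cring.
  * exact: nz_vec5 (oner_neq0 _).
  * rewrite psumE /vec5 /=; cring.
  * apply: ord5P; rewrite psumE /vec5 /=; cring.
move=> w hw hv.
have hc : const5 (Mw (4, (-1)) (vec5 1 (-1) 1 (-1) 0 : 'I_5 -> C) w) by apply/perpE => v hv'; rewrite -hessbE; exact: hv.
have e1 : Mw (4, (-1)) (vec5 1 (-1) 1 (-1) 0 : 'I_5 -> C) w o1 - Mw (4, (-1)) (vec5 1 (-1) 1 (-1) 0 : 'I_5 -> C) w o0 = 0 by rewrite (hc o1 o0) subrr.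
have e2 : Mw (4, (-1)) (vec5 1 (-1) 1 (-1) 0 : 'I_5 -> C) w o2 - Mw (4, (-1)) (vec5 1 (-1) 1 (-1) 0 : 'I_5 -> C) w o0 = 0 by rewrite (hc o2 o0) subrr.
have e3 : Mw (4, (-1)) (vec5 1 (-1) 1 (-1) 0 : 'I_5 -> C) w o3 - Mw (4, (-1)) (vec5 1 (-1) 1 (-1) 0 : 'I_5 -> C) w o0 = 0 by rewrite (hc o3 o0) subrr.
have e4 : Mw (4, (-1)) (vec5 1 (-1) 1 (-1) 0 : 'I_5 -> C) w o4 - Mw (4, (-1)) (vec5 1 (-1) 1 (-1) 0 : 'I_5 -> C) w o0 = 0 by rewrite (hc o4 o0) subrr.
exists (w o0); apply: ord5P.
- have h : 1 * (w o0 - w o0 * (vec5 1 (-1) 1 (-1) 0 : 'I_5 -> C) o0) = 0.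
    apply: (lin5 (m0 := 0) (m1 := 0) (m2 := 0) (m3 := 0) (m4 := 0) hw e1 e2 e3 e4).
    rewrite /Mw /dot5 !psumE /vec5 /=; cring.
  by move: h; rewrite mul1r => /eqP; rewrite subr_eq0 => /eqP.
- have h : 32 * (w o1 - w o0 * (vec5 1 (-1) 1 (-1) 0 : 'I_5 -> C) o1) = 0.
    apply: (lin5 (m0 := 32) (m1 := 1) (m2 := (-2)) (m3 := 0) (m4 := 2) hw e1 e2 e3 e4).
    rewrite /Mw /dot5 !psumE /vec5 /=; cring.
  by move/eqP: h; rewrite mulf_eq0 (negbTE (nat_neq0 C 31)) /= subr_eq0 => /eqP.
- have h : 32 * (w o2 - w o0 * (vec5 1 (-1) 1 (-1) 0 : 'I_5 -> C) o2) = 0.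
    apply: (lin5 (m0 := 0) (m1 := 0) (m2 := 1) (m3 := 0) (m4 := 0) hw e1 e2 e3 e4).
    rewrite /Mw /dot5 !psumE /vec5 /=; cring.
  by move/eqP: h; rewrite mulf_eq0 (negbTE (nat_neq0 C 31)) /= subr_eq0 => /eqP.
- have h : 32 * (w o3 - w o0 * (vec5 1 (-1) 1 (-1) 0 : 'I_5 -> C) o3) = 0.
    apply: (lin5 (m0 := 32) (m1 := (-1)) (m2 := (-1)) (m3 := 0) (m4 := 2) hw e1 e2 e3 e4).
    rewrite /Mw /dot5 !psumE /vec5 /=; cring.
  by move/eqP: h; rewrite mulf_eq0 (negbTE (nat_neq0 C 31)) /= subr_eq0 => /eqP.
- have h : 16 * (w o4 - w o0 * (vec5 1 (-1) 1 (-1) 0 : 'I_5 -> C) o4) = 0.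
    apply: (lin5 (m0 := (-16)) (m1 := 0) (m2 := 1) (m3 := 0) (m4 := (-2)) hw e1 e2 e3 e4).
    rewrite /Mw /dot5 !psumE /vec5 /=; cring.
  by move/eqP: h; rewrite mulf_eq0 (negbTE (nat_neq0 C 15)) /= subr_eq0 => /eqP.
Qed.

Lemma A1_2 : A1_pt ((2, (-1)) : C * C) (vec5 1 (-1) 0 0 0 : 'I_5 -> C).
Proof.
split.
- apply: (sing_from (A := 2) (B := (-1))) => //.
  * by rewrite oppr_eq0 oner_neq0.
  * cring.
  * exact: nz_vec5 (oner_neq0 _).
  * rewrite psumE /vec5 /=; cring.
  * apply: ord5P; rewrite psumE /vec5 /=; cring.
move=> w hw hv.
have hc : const5 (Mw (2, (-1)) (vec5 1 (-1) 0 0 0 : 'I_5 -> C) w) by apply/perpE => v hv'; rewrite -hessbE; exact: hv.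
have e1 : Mw (2, (-1)) (vec5 1 (-1) 0 0 0 : 'I_5 -> C) w o1 - Mw (2, (-1)) (vec5 1 (-1) 0 0 0 : 'I_5 -> C) w o0 = 0 by rewrite (hc o1 o0) subrr.
have e2 : Mw (2, (-1)) (vec5 1 (-1) 0 0 0 : 'I_5 -> C) w o2 - Mw (2, (-1)) (vec5 1 (-1) 0 0 0 : 'I_5 -> C) w o0 = 0 by rewrite (hc o2 o0) subrr.
have e3 : Mw (2, (-1)) (vec5 1 (-1) 0 0 0 : 'I_5 -> C) w o3 - Mw (2, (-1)) (vec5 1 (-1) 0 0 0 : 'I_5 -> C) w o0 = 0 by rewrite (hc o3 o0) subrr.
have e4 : Mw (2, (-1)) (vec5 1 (-1) 0 0 0 : 'I_5 -> C) w o4 - Mw (2, (-1)) (vec5 1 (-1) 0 0 0 : 'I_5 -> C) w o0 = 0 by rewrite (hc o4 o0) subrr.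
exists (w o0); apply: ord5P.
- have h : 1 * (w o0 - w o0 * (vec5 1 (-1) 0 0 0 : 'I_5 -> C) o0) = 0.
    apply: (lin5 (m0 := 0) (m1 := 0) (m2 := 0) (m3 := 0) (m4 := 0) hw e1 e2 e3 e4).
    rewrite /Mw /dot5 !psumE /vec5 /=; cring.
  by move: h; rewrite mul1r => /eqP; rewrite subr_eq0 => /eqP.
- have h : 16 * (w o1 - w o0 * (vec5 1 (-1) 0 0 0 : 'I_5 -> C) o1) = 0.
    apply: (lin5 (m0 := (-8)) (m1 := 0) (m2 := (-1)) (m3 := (-1)) (m4 := (-1)) hw e1 e2 e3 e4).
    rewrite /Mw /dot5 !psumE /vec5 /=; cring.
  by move/eqP: h; rewrite mulf_eq0 (negbTE (nat_neq0 C 15)) /= subr_eq0 => /eqP.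
- have h : 16 * (w o2 - w o0 * (vec5 1 (-1) 0 0 0 : 'I_5 -> C) o2) = 0.
    apply: (lin5 (m0 := 8) (m1 := 0) (m2 := (-1)) (m3 := 1) (m4 := 1) hw e1 e2 e3 e4).
    rewrite /Mw /dot5 !psumE /vec5 /=; cring.
  by move/eqP: h; rewrite mulf_eq0 (negbTE (nat_neq0 C 15)) /= subr_eq0 => /eqP.
- have h : 16 * (w o3 - w o0 * (vec5 1 (-1) 0 0 0 : 'I_5 -> C) o3) = 0.
    apply: (lin5 (m0 := 8) (m1 := 0) (m2 := 1) (m3 := (-1)) (m4 := 1) hw e1 e2 e3 e4).
    rewrite /Mw /dot5 !psumE /vec5 /=; cring.
  by move/eqP: h; rewrite mulf_eq0 (negbTE (nat_neq0 C 15)) /= subr_eq0 => /eqP.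
- have h : 16 * (w o4 - w o0 * (vec5 1 (-1) 0 0 0 : 'I_5 -> C) o4) = 0.
    apply: (lin5 (m0 := 8) (m1 := 0) (m2 := 1) (m3 := 1) (m4 := (-1)) hw e1 e2 e3 e4).
    rewrite /Mw /dot5 !psumE /vec5 /=; cring.
  by move/eqP: h; rewrite mulf_eq0 (negbTE (nat_neq0 C 15)) /= subr_eq0 => /eqP.
Qed.

Lemma A1_3 : A1_pt ((30, (-7)) : C * C) (vec5 2 2 2 (-3) (-3) : 'I_5 -> C).
Proof.
split.
- apply: (sing_from (A := 30) (B := (-7))) => //.
  * by rewrite oppr_eq0 (nat_neq0 C 6).
  * cring.
  * exact: nz_vec5 (nat_neq0 C 1).
  * rewrite psumE /vec5 /=; cring.
  * apply: ord5P; rewrite psumE /vec5 /=; cring.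
move=> w hw hv.
have hc : const5 (Mw (30, (-7)) (vec5 2 2 2 (-3) (-3) : 'I_5 -> C) w) by apply/perpE => v hv'; rewrite -hessbE; exact: hv.
have e1 : Mw (30, (-7)) (vec5 2 2 2 (-3) (-3) : 'I_5 -> C) w o1 - Mw (30, (-7)) (vec5 2 2 2 (-3) (-3) : 'I_5 -> C) w o0 = 0 by rewrite (hc o1 o0) subrr.
have e2 : Mw (30, (-7)) (vec5 2 2 2 (-3) (-3) : 'I_5 -> C) w o2 - Mw (30, (-7)) (vec5 2 2 2 (-3) (-3) : 'I_5 -> C) w o0 = 0 by rewrite (hc o2 o0) subrr.
have e3 : Mw (30, (-7)) (vec5 2 2 2 (-3) (-3) : 'I_5 -> C) w o3 - Mw (30, (-7)) (vec5 2 2 2 (-3) (-3) : 'I_5 -> C) w o0 = 0 by rewrite (hc o3 o0) subrr.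
have e4 : Mw (30, (-7)) (vec5 2 2 2 (-3) (-3) : 'I_5 -> C) w o4 - Mw (30, (-7)) (vec5 2 2 2 (-3) (-3) : 'I_5 -> C) w o0 = 0 by rewrite (hc o4 o0) subrr.
exists ((- (w o0 + w o3))); apply: ord5P.
- have h : 3600 * (w o0 - (- (w o0 + w o3)) * (vec5 2 2 2 (-3) (-3) : 'I_5 -> C) o0) = 0.
    apply: (lin5 (m0 := 2520) (m1 := (-7)) (m2 := (-7)) (m3 := 3) (m4 := 0) hw e1 e2 e3 e4).
    rewrite /Mw /dot5 !psumE /vec5 /=; cring.
  by move/eqP: h; rewrite mulf_eq0 (negbTE (nat_neq0 C 3599)) /= subr_eq0 => /eqP.
- have h : 3600 * (w o1 - (- (w o0 + w o3)) * (vec5 2 2 2 (-3) (-3) : 'I_5 -> C) o1) = 0.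
    apply: (lin5 (m0 := 2520) (m1 := (-1)) (m2 := (-7)) (m3 := 3) (m4 := 0) hw e1 e2 e3 e4).
    rewrite /Mw /dot5 !psumE /vec5 /=; cring.
  by move/eqP: h; rewrite mulf_eq0 (negbTE (nat_neq0 C 3599)) /= subr_eq0 => /eqP.
- have h : 3600 * (w o2 - (- (w o0 + w o3)) * (vec5 2 2 2 (-3) (-3) : 'I_5 -> C) o2) = 0.
    apply: (lin5 (m0 := 2520) (m1 := (-7)) (m2 := (-1)) (m3 := 3) (m4 := 0) hw e1 e2 e3 e4).
    rewrite /Mw /dot5 !psumE /vec5 /=; cring.
  by move/eqP: h; rewrite mulf_eq0 (negbTE (nat_neq0 C 3599)) /= subr_eq0 => /eqP.
- have h : 3600 * (w o3 - (- (w o0 + w o3)) * (vec5 2 2 2 (-3) (-3) : 'I_5 -> C) o3) = 0.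
    apply: (lin5 (m0 := (-2520)) (m1 := 7) (m2 := 7) (m3 := (-3)) (m4 := 0) hw e1 e2 e3 e4).
    rewrite /Mw /dot5 !psumE /vec5 /=; cring.
  by move/eqP: h; rewrite mulf_eq0 (negbTE (nat_neq0 C 3599)) /= subr_eq0 => /eqP.
- have h : 1800 * (w o4 - (- (w o0 + w o3)) * (vec5 2 2 2 (-3) (-3) : 'I_5 -> C) o4) = 0.
    apply: (lin5 (m0 := (-720)) (m1 := 4) (m2 := 4) (m3 := (-3)) (m4 := 0) hw e1 e2 e3 e4).
    rewrite /Mw /dot5 !psumE /vec5 /=; cring.
  by move/eqP: h; rewrite mulf_eq0 (negbTE (nat_neq0 C 1799)) /= subr_eq0 => /eqP.
Qed.

Lemma A1_4 : A1_pt ((20, (-13)) : C * C) (vec5 1 1 1 1 (-4) : 'I_5 -> C).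
Proof.
split.
- apply: (sing_from (A := 20) (B := (-13))) => //.
  * by rewrite oppr_eq0 (nat_neq0 C 12).
  * cring.
  * exact: nz_vec5 (oner_neq0 _).
  * rewrite psumE /vec5 /=; cring.
  * apply: ord5P; rewrite psumE /vec5 /=; cring.
move=> w hw hv.
have hc : const5 (Mw (20, (-13)) (vec5 1 1 1 1 (-4) : 'I_5 -> C) w) by apply/perpE => v hv'; rewrite -hessbE; exact: hv.
have e1 : Mw (20, (-13)) (vec5 1 1 1 1 (-4) : 'I_5 -> C) w o1 - Mw (20, (-13)) (vec5 1 1 1 1 (-4) : 'I_5 -> C) w o0 = 0 by rewrite (hc o1 o0) subrr.
have e2 : Mw (20, (-13)) (vec5 1 1 1 1 (-4) : 'I_5 -> C) w o2 - Mw (20, (-13)) (vec5 1 1 1 1 (-4) : 'I_5 -> C) w o0 = 0 by rewrite (hc o2 o0) subrr.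
have e3 : Mw (20, (-13)) (vec5 1 1 1 1 (-4) : 'I_5 -> C) w o3 - Mw (20, (-13)) (vec5 1 1 1 1 (-4) : 'I_5 -> C) w o0 = 0 by rewrite (hc o3 o0) subrr.
have e4 : Mw (20, (-13)) (vec5 1 1 1 1 (-4) : 'I_5 -> C) w o4 - Mw (20, (-13)) (vec5 1 1 1 1 (-4) : 'I_5 -> C) w o0 = 0 by rewrite (hc o4 o0) subrr.
exists (w o0); apply: ord5P.
- have h : 1 * (w o0 - w o0 * (vec5 1 1 1 1 (-4) : 'I_5 -> C) o0) = 0.
    apply: (lin5 (m0 := 0) (m1 := 0) (m2 := 0) (m3 := 0) (m4 := 0) hw e1 e2 e3 e4).
    rewrite /Mw /dot5 !psumE /vec5 /=; cring.
  by move: h; rewrite mul1r => /eqP; rewrite subr_eq0 => /eqP.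
- have h : 800 * (w o1 - w o0 * (vec5 1 1 1 1 (-4) : 'I_5 -> C) o1) = 0.
    apply: (lin5 (m0 := 0) (m1 := (-1)) (m2 := 0) (m3 := 0) (m4 := 0) hw e1 e2 e3 e4).
    rewrite /Mw /dot5 !psumE /vec5 /=; cring.
  by move/eqP: h; rewrite mulf_eq0 (negbTE (nat_neq0 C 799)) /= subr_eq0 => /eqP.
- have h : 800 * (w o2 - w o0 * (vec5 1 1 1 1 (-4) : 'I_5 -> C) o2) = 0.
    apply: (lin5 (m0 := 0) (m1 := 0) (m2 := (-1)) (m3 := 0) (m4 := 0) hw e1 e2 e3 e4).
    rewrite /Mw /dot5 !psumE /vec5 /=; cring.
  by move/eqP: h; rewrite mulf_eq0 (negbTE (nat_neq0 C 799)) /= subr_eq0 => /eqP.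
- have h : 800 * (w o3 - w o0 * (vec5 1 1 1 1 (-4) : 'I_5 -> C) o3) = 0.
    apply: (lin5 (m0 := 0) (m1 := 0) (m2 := 0) (m3 := (-1)) (m4 := 0) hw e1 e2 e3 e4).
    rewrite /Mw /dot5 !psumE /vec5 /=; cring.
  by move/eqP: h; rewrite mulf_eq0 (negbTE (nat_neq0 C 799)) /= subr_eq0 => /eqP.
- have h : 800 * (w o4 - w o0 * (vec5 1 1 1 1 (-4) : 'I_5 -> C) o4) = 0.
    apply: (lin5 (m0 := 800) (m1 := 1) (m2 := 1) (m3 := 1) (m4 := 0) hw e1 e2 e3 e4).
    rewrite /Mw /dot5 !psumE /vec5 /=; cring.
  by move/eqP: h; rewrite mulf_eq0 (negbTE (nat_neq0 C 799)) /= subr_eq0 => /eqP.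
Qed.
End A1s.


Lemma H2s (f0 f1 f2 f3 f4 : nat) : (f0 < 3)%nat -> (f1 < 3)%nat -> (f2 < 3)%nat -> (f3 < 3)%nat -> (f4 < 3)%nat ->
  let z := zvec [:: f0; f1; f2; f3; f4] in
  [/\ check2 4 (-1) p1Z tab1 z, check2 2 (-1) p2Z tab2 z, check2 30 (-7) p3Z tab3 z & check2 20 (-13) p4Z tab4 z].
Proof.
move=> h0 h1 h2 h3 h4 /=.
by case/and5P: (@goodfs_all _ _ _ _ _ h0 h1 h2 h3 h4) => _ _ c1 c2 /andP [c3 c4].
Qed.

Lemma statics' : [/\ tabok tab1, tabok tab2, tabok tab3, tabok tab4 &
  [/\ check3 p1Z tab1, check3 p2Z tab2, check3 p3Z tab3 & check3 p4Z tab4]].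
Proof.
by case/and5P: statics => a b c d /and4P [e f g h].
Qed.

Unset Implicit Arguments.
Theorem proposition3p1 (C : numClosedFieldType) :
  (forall t : C * C, t != (0, 0) ->
     ((exists x, sing_pt t x) <->
      (same_P1 t 4 (-1) \/ same_P1 t 2 (-1) \/ same_P1 t 30 (-7) \/
       same_P1 t 20 (-13) \/ same_P1 t 0 1))) /\
  nodal_config (C := C) (4, -1) 15 (vec5 1 (-1) 1 (-1) 0) /\
  nodal_config (C := C) (2, -1) 10 (vec5 1 (-1) 0 0 0) /\
  nodal_config (C := C) (30, -7) 10 (vec5 2 2 2 (-3) (-3)) /\
  nodal_config (C := C) (20, -13) 5 (vec5 1 1 1 1 (-4)) /\
  (forall (R : comNzRingType) (x : 'I_5 -> R), Gform x (0, 1) = psum 2 x ^+ 2) /\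
  (forall x : 'I_5 -> C, nonzero5 x -> psum 1 x = 0 ->
     (sing_pt (C := C) (0, 1) x <-> psum 2 x = 0)) /\
  (forall (x : 'I_5 -> C) (t : C * C), nonzero5 x -> t != (0, 0) ->
     (total_sing_pt x t <->
      [/\ same_P1 t 0 1, psum 1 x = 0, psum 2 x = 0 & psum 4 x = 0])).
Proof.
have [tk1 tk2 tk3 tk4 [k1 k2 k3 k4]] := statics'.
split; first exact: part1.
split.
  apply: (@nodal_gen C 4%Z (-1)%Z p1Z tab1 _ tk1 k1); last exact: A1_1.
  - by move=> f0 f1 f2 f3 f4 h0 h1 h2 h3 h4; case: (H2s h0 h1 h2 h3 h4).
  - by apply: ord5P.
  - exact: (nat_neq0 C 3).
split.
  apply: (@nodal_gen C 2%Z (-1)%Z p2Z tab2 _ tk2 k2); last exact: A1_2.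
  - by move=> f0 f1 f2 f3 f4 h0 h1 h2 h3 h4; case: (H2s h0 h1 h2 h3 h4).
  - by apply: ord5P.
  - exact: (nat_neq0 C 1).
split.
  apply: (@nodal_gen C 30%Z (-7)%Z p3Z tab3 _ tk3 k3); last exact: A1_3.
  - by move=> f0 f1 f2 f3 f4 h0 h1 h2 h3 h4; case: (H2s h0 h1 h2 h3 h4).
  - by apply: ord5P.
  - exact: (nat_neq0 C 29).
split.
  apply: (@nodal_gen C 20%Z (-13)%Z p4Z tab4 _ tk4 k4); last exact: A1_4.
  - by move=> f0 f1 f2 f3 f4 h0 h1 h2 h3 h4; case: (H2s h0 h1 h2 h3 h4).
  - by apply: ord5P.
  - exact: (nat_neq0 C 19).
split; first exact: part6.
split; first exact: part7.
exact: part8.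
Qed.
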